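(* Let $G=(V,E)$ be a graph that is $M$-connected in $\mathbb{R}^d$. Then $G$ is $M$-connected in $\mathbb{R}^{d'}$ for all $1\leq d'\leq d$.
   Context: For $p:V\to\mathbb{R}^k$ the rigidity matrix $R(G,p)$ is the $|E|\times k|V|$ matrix whose row for edge $uv$ has $p(u)-p(v)$ in the columns of $u$, $p(v)-p(u)$ in the columns of $v$, zeros elsewhere. The $k$-dimensional rigidity matroid $\mathcal{R}_k(G)$ on $E$ is defined by linear independence of rows of $R(G,p)$ for $p$ generic (coordinates algebraically independent over $\mathbb{Q}$). $G$ is $M$-connected in $\mathbb{R}^k$ if $\mathcal{R}_k(G)$ is connected, i.e.\ any two distinct edges lie in a common circuit of $\mathcal{R}_k(G)$. *)

(* Defs.v *)
From HB Require Import structures.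
From mathcomp Require Import all_boot all_order all_algebra.
From mathcomp Require Import mpoly.
From Stdlib Require Rdefinitions.
From mathcomp Require Import Rstruct.
Notation R := Rdefinitions.R.

Set Implicit Arguments.
Unset Strict Implicit.
Unset Printing Implicit Defensive.

Import GRing.Theory Num.Theory.
Local Open Scope ring_scope.

Definition simple_graph (V : finType) (E : {set {set V}}) : Prop :=
  forall e, e \in E -> #|e| = 2%N.

Definition alg_indep_Q (I : finType) (x : I -> R) : Prop :=
  forall P : mpoly.mpoly #|I| rat, P != 0 ->
    mpoly.mmap (@ratr R) (fun j : 'I_#|I| => x (enum_val j)) P != 0.

Definition generic (V : finType) (k : nat) (p : V -> 'I_k -> R) : Prop :=
  alg_indep_Q (fun vi : V * 'I_k => p vi.1 vi.2).

(* Entry of the rigidity matrix R(G,p) in row e = {u,v} and column (w,i):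
   for w = u it is p(u)_i - p(v)_i, for w = v it is p(v)_i - p(u)_i,
   and 0 if w is not an endpoint of e.  (For w in e = {u,v} the sum below
   equals (p w i - p w i) + (p w i - p x i) with x the other endpoint.) *)
Definition rig_entry (V : finType) (k : nat) (p : V -> 'I_k -> R)
    (e : {set V}) (w : V) (i : 'I_k) : R :=
  if w \in e then \sum_(x in e) (p w i - p x i) else 0.

Definition rows_indep (V : finType) (k : nat) (p : V -> 'I_k -> R)
    (F : {set {set V}}) : Prop :=
  forall c : {set V} -> R,
    (forall (w : V) (i : 'I_k), \sum_(e in F) c e * rig_entry p e w i = 0) ->
    forall e, e \in F -> c e = 0.

Definition rig_indep (V : finType) (k : nat) (F : {set {set V}}) : Prop :=
  forall p : V -> 'I_k -> R, generic p -> rows_indep p F.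

Definition rig_circuit (V : finType) (k : nat) (E C : {set {set V}}) : Prop :=
  [/\ C \subset E, ~ rig_indep k C &
      forall C' : {set {set V}}, C' \proper C -> rig_indep k C'].

Definition M_connected (V : finType) (k : nat) (E : {set {set V}}) : Prop :=
  forall e f, e \in E -> f \in E -> e != f ->
    exists C, rig_circuit k E C /\ e \in C /\ f \in C.

(* Main.v *)
Require Import Defs.
From mathcomp Require Import all_boot all_order all_algebra.
From mathcomp Require Import mpoly Rstruct.
From Stdlib Require Import Classical ClassicalEpsilon.
Set Implicit Arguments.
Unset Strict Implicit.
Unset Printing Implicit Defensive.
Import GRing.Theory Num.Theory.
Local Open Scope ring_scope.

Section LinAlg.
Variables (V : finType) (k : nat) (p : V -> 'I_k -> R).

Definition st (c : {set V} -> R) :=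
  forall w i, \sum_e c e * rig_entry p e w i = 0.
Definition supp (c : {set V} -> R) := [set e | c e != 0].
Definition circ (D : {set {set V}}) :=
  ~ rows_indep p D /\ forall D' : {set {set V}}, D' \proper D -> rows_indep p D'.

Lemma st_ext c c' : st c -> c =1 c' -> st c'.
Proof.
move=> h eq w i; rewrite -[RHS](h w i).
by apply: eq_bigr => e _; rewrite eq.
Qed.

Lemma st0 : st (fun _ => 0).
Proof. by move=> w i; rewrite big1 // => e _; rewrite mul0r. Qed.

Lemma st_lin a b c1 c2 : st c1 -> st c2 -> st (fun e => a * c1 e + b * c2 e).
Proof.
move=> h1 h2 w i.
under eq_bigr => e _ do rewrite mulrDl -!mulrA.
by rewrite big_split /= -!mulr_sumr h1 h2 !mulr0 addr0.
Qed.

Lemma indepP F : rows_indep p F <->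
  (forall c, st c -> supp c \subset F -> supp c = set0).
Proof.
split.
- move=> hF c hc hs; apply/setP => e; rewrite inE in_set0.
  case: (boolP (e \in F)) => heF.
  + rewrite (hF c) ?eqxx //.
    move=> w i; rewrite -[RHS](hc w i) [RHS](bigID (mem F)) /=.
    rewrite [X in _ = _ + X]big1 ?addr0 // => x hx.
    have : x \notin supp c by apply: contra hx; move/subsetP: hs; apply.
    by rewrite inE negbK => /eqP ->; rewrite mul0r.
  + apply/negbTE/negP => hce; move/subsetP: hs => /(_ e); rewrite inE hce => /(_ isT).
    by rewrite (negbTE heF).
- move=> h c hc e he.
  have := h (fun e => if e \in F then c e else 0).
  have hst : st (fun e => if e \in F then c e else 0).
    move=> w i; rewrite -[RHS](hc w i) [RHS]big_mkcond /=; apply: eq_bigr => x _.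
    by case: (x \in F); rewrite ?mul0r.
  move=> /(_ hst).
  have hs : supp (fun e => if e \in F then c e else 0) \subset F.
    by apply/subsetP => x; rewrite inE; case: ifP => // _; rewrite eqxx.
  move=> /(_ hs) /setP /(_ e); rewrite !inE he.
  by case: eqP.
Qed.

Lemma dep_stress F : ~ rows_indep p F ->
  exists c, [/\ st c, supp c \subset F & supp c != set0].
Proof.
move=> h; apply: NNPP => hn; apply: h; apply/indepP => c hc hs.
apply: NNPP => hne; apply: hn; exists c; split => //; exact/eqP.
Qed.

Lemma circ_stress D : circ D -> exists c, st c /\ supp c = D.
Proof.
case=> hd hmin; have [c [hc hs hne]] := dep_stress hd.
exists c; split => //.
case: (boolP (supp c \proper D)) => hp.
  by have := (indepP _).1 (hmin _ hp) c hc (subxx _) => /eqP; rewrite (negbTE hne).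
by apply/eqP; rewrite eqEproper hs hp.
Qed.

Lemma circ_not_proper D1 D2 : circ D1 -> circ D2 -> ~ D1 \proper D2.
Proof. by move=> [h1 _] [_ h2] hp; apply: h1; apply: h2. Qed.

Lemma supp_comb c r y (t := c y / r y) :
  r y != 0 -> supp (fun e => 1 * c e + (- t) * r e) \subset (supp c :|: supp r) :\ y.
Proof.
move=> hr; apply/subsetP => e; rewrite !inE.
case: (eqVneq e y) => [->|hey] /=.
  by rewrite /t mulNr mul1r divfK // subrr eqxx.
case: (eqVneq (c e) 0) => [->|] //=; case: (eqVneq (r e) 0) => [->|] //=.
by rewrite !(mulr0, addr0, eqxx).
Qed.

Lemma circ_in_supp_aux n : forall tau x, (#|supp tau| < n)%N -> st tau -> x \in supp tau ->
  exists D, [/\ circ D, x \in D & D \subset supp tau].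
Proof.
elim: n => [//|n IH] tau x hn htau hx.
case: (classic (circ (supp tau))) => hc; first by exists (supp tau).
have hdep : ~ rows_indep p (supp tau).
  move/indepP => h; have := h tau htau (subxx _) => /setP /(_ x).
  by rewrite hx in_set0.
have : exists D' : {set {set V}}, D' \proper supp tau /\ ~ rows_indep p D'.
  apply: NNPP => hn'; apply: hc; split => // D' hD'; apply: NNPP => hi.
  by apply: hn'; exists D'.
move=> [D' [hD' hi]]; have [r [hr hrs hrne]] := dep_stress hi.
have hrsub : supp r \proper supp tau := sub_proper_trans hrs hD'.
case: (boolP (x \in supp r)) => hxr.
  have [D [hD hxD hDs]] := IH r x (leq_trans (proper_card hrsub) (ltnSE hn)) hr hxr.
  by exists D; split => //; apply: subset_trans hDs (proper_sub hrsub).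
have [y hy] := set0Pn _ hrne.
have hry : r y != 0 by move: hy; rewrite inE.
set tau' := (fun e => 1 * tau e + (- (tau y / r y)) * r e).
have hs' := supp_comb tau hry.
have hsub' : supp tau' \subset supp tau.
  apply: subset_trans hs' _; apply/subsetP => e; rewrite !inE => /andP [_ /orP [//|he]].
  by have := subsetP (proper_sub hrsub) e; rewrite !inE; apply.
have hlt : (#|supp tau'| < #|supp tau|)%N.
  apply: proper_card; rewrite properEneq hsub' andbT; apply/eqP => heq.
  move/subsetP: hs' => /(_ y); rewrite -/tau' heq.
  have hyt : y \in supp tau by apply: (subsetP (proper_sub hrsub)).
  by move=> /(_ hyt); rewrite !inE eqxx.
have hxt' : x \in supp tau'.
  by move: hxr hx; rewrite !inE /tau' => /negPn /eqP ->; rewrite mulr0 addr0 mul1r.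
have [D [hD hxD hDs]] := IH tau' x (leq_trans hlt (ltnSE hn)) (st_lin _ _ htau hr) hxt'.
by exists D; split => //; apply: subset_trans hDs hsub'.
Qed.

Lemma circ_in_supp tau x : st tau -> x \in supp tau ->
  exists D, [/\ circ D, x \in D & D \subset supp tau].
Proof. exact: (@circ_in_supp_aux (#|supp tau|).+1). Qed.

End LinAlg.

Section LinAlg2.
Variables (V : finType) (k : nat) (p : V -> 'I_k -> R).
Local Notation st := (st p).
Local Notation circ := (circ p).

Lemma circ_elim (D1 D2 : {set {set V}}) (x z : {set V}) : circ D1 -> circ D2 -> x \in D1 -> x \in D2 ->
  z \in D1 -> z \notin D2 ->
  exists D3 : {set {set V}}, [/\ circ D3, z \in D3 & D3 \subset (D1 :|: D2) :\ x].
Proof.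
move=> c1 c2 x1 x2 z1 z2.
have [a1 [s1 e1]] := circ_stress c1.
have [a2 [s2 e2]] := circ_stress c2.
set tau := fun e => a2 x * a1 e + (- a1 x) * a2 e.
have st_tau : st tau := st_lin _ _ s1 s2.
have nz1 : forall e, (a1 e != 0) = (e \in D1) by move=> e; rewrite -e1 inE.
have nz2 : forall e, (a2 e != 0) = (e \in D2) by move=> e; rewrite -e2 inE.
have hz : z \in supp tau.
  rewrite inE /tau; move: (z2); rewrite -nz2 negbK => /eqP ->.
  by rewrite mulr0 addr0 mulf_neq0 ?nz1 ?nz2.
have [D3 [h3 hz3 hs3]] := circ_in_supp st_tau hz.
exists D3; split => //; apply: subset_trans hs3 _; apply/subsetP => e.
rewrite !inE /tau; case: (eqVneq e x) => [->|_] /=.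
  by rewrite mulrC mulNr subrr eqxx.
rewrite -nz1 -nz2; case: (eqVneq (a1 e) 0) => [->|] //=.
by case: (eqVneq (a2 e) 0) => [->|] //=; rewrite !mulr0 addr0 eqxx.
Qed.

Lemma circ_trans_aux (D1 U : {set {set V}}) (e h : {set V}) : circ D1 -> e \in D1 -> D1 \subset U ->
  forall n (D : {set {set V}}), (#|D :\: D1| < n)%N -> circ D -> h \in D -> D :&: D1 != set0 ->
  D \subset U ->
  exists D' : {set {set V}}, [/\ circ D', e \in D', h \in D' & D' \subset U].
Proof.
move=> c1 he1 hU1; elim=> [//|n IH] D hn cD hD hmeet hU.
case: (boolP (e \in D)) => heD; first by exists D.
have [x] := set0Pn _ hmeet; rewrite inE => /andP [xD xD1].
have [D3 [c3 he3 hs3]] := circ_elim c1 cD xD1 xD he1 heD.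
case: (boolP (h \in D3)) => hh3.
  exists D3; split => //; apply: subset_trans hs3 _; apply/subsetP => y.
  rewrite !inE => /andP [_ /orP [hy|hy]]; [exact: (subsetP hU1) | exact: (subsetP hU)].
have [y hy3 hy1] : exists2 y, y \in D3 & y \notin D1.
  apply/exists_inP; apply: contraT; rewrite negb_exists_in => /forall_inP hall.
  have hsub : D3 \proper D1.
    rewrite properE; apply/andP; split.
      by apply/subsetP => y hy; move: (hall y hy); rewrite negbK.
    apply/subsetP => /(_ x xD1) hx3.
    by move/subsetP: hs3 => /(_ x hx3); rewrite !inE eqxx.
  by exfalso; apply: (circ_not_proper c3 c1).
have yD : y \in D.
  by move/subsetP: hs3 => /(_ y hy3); rewrite !inE (negbTE hy1) /= => /andP [].
have [D4 [c4 hh4 hs4]] := circ_elim cD c3 yD hy3 hD hh3.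
have hz4 : forall z, z \in D4 -> (z != y) && ((z \in D) || (z \in D1)).
  move=> z hz; move/subsetP: hs4 => /(_ z hz); rewrite !inE => /andP [-> /orP [->//|hz3]].
  by move/subsetP: hs3 => /(_ z hz3); rewrite !inE => /andP [_ /orP [->|->]]; rewrite ?orbT.
have hyD4 : y \notin D4 by apply/negP => /hz4; rewrite eqxx.
case: (eqVneq (D4 :&: D1) set0) => hm4.
  exfalso; apply: (circ_not_proper c4 cD).
  rewrite properE; apply/andP; split.
    apply/subsetP => z hz; move: (hz4 z hz) => /andP [_ /orP [//|hz1]].
    by move/setP: hm4 => /(_ z); rewrite !inE hz hz1.
  by apply/subsetP => /(_ y yD); rewrite (negbTE hyD4).
apply: (IH D4) => //.
- have hlt: (#|D4 :\: D1| < #|D :\: D1|)%N.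
    apply: proper_card; rewrite properE; apply/andP; split.
      apply/subsetP => z; rewrite !inE => /andP [hz1 hz]; rewrite hz1 /=.
      by move: (hz4 z hz) => /andP [_]; rewrite (negbTE hz1) orbF.
    by apply/subsetP => /(_ y); rewrite !inE hy1 yD (negbTE hyD4) => /(_ isT).
  exact: leq_trans hlt (ltnSE hn).
- apply/subsetP => z hz; move: (hz4 z hz) => /andP [_ /orP [hz'|hz']].
  + exact: (subsetP hU).
  + exact: (subsetP hU1).
Qed.

Lemma circ_trans (D1 D2 : {set {set V}}) (e h : {set V}) :
  circ D1 -> circ D2 -> e \in D1 -> h \in D2 -> D2 :&: D1 != set0 ->
  exists D' : {set {set V}}, [/\ circ D', e \in D', h \in D' & D' \subset D1 :|: D2].
Proof.
move=> c1 c2 he hh hm.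
apply: (circ_trans_aux c1 he (subsetUl D1 D2) (n := #|D2 :\: D1|.+1) _ c2) => //.
exact: subsetUr.
Qed.

Lemma sep (C A : {set {set V}}) :
  (forall D : {set {set V}}, circ D -> D \subset C -> D :&: A != set0 -> D \subset A) ->
  forall n (om : {set V} -> R), (#|supp om| < n)%N -> st om -> supp om \subset C ->
  st (fun e => if e \in A then om e else 0).
Proof.
move=> hA; elim=> [//|n IH] om hn hom hC.
case: (eqVneq (supp om) set0) => h0.
  apply: (st_ext (st0 p)) => e /=.
  have : e \notin supp om by rewrite h0 in_set0.
  by rewrite inE negbK => /eqP ->; case: ifP.
have [x hx] := set0Pn _ h0.
have [D [cD xD Ds]] := circ_in_supp hom hx.
have [r [hr er]] := circ_stress cD.
have hrx : r x != 0 by move: xD; rewrite -er inE.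
set om' := fun e => 1 * om e + (- (om x / r x)) * r e.
have hs' := supp_comb om hrx.
have hsub : supp om' \subset supp om :\ x.
  apply: subset_trans hs' _; apply/subsetP => e; rewrite !inE => /andP [-> /orP [//|he]].
  by move/subsetP: Ds => /(_ e); rewrite -er !inE; apply.
have hlt : (#|supp om'| < #|supp om|)%N.
  apply: proper_card; apply: sub_proper_trans hsub _; exact: properD1.
have IH' := IH om' (leq_trans hlt (ltnSE hn)) (st_lin _ _ hom hr)
  (subset_trans hsub (subset_trans (subD1set _ _) hC)).
have hrA : st (fun e => if e \in A then r e else 0).
  case: (eqVneq (D :&: A) set0) => hDA.
    apply: (st_ext (st0 p)) => e /=; case: ifP => // heA.
    have : e \notin D by apply/negP => heD; move/setP: hDA => /(_ e); rewrite !inE heD heA.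
    by rewrite -er inE negbK => /eqP ->.
  have hDA' := hA D cD (subset_trans Ds hC) hDA.
  apply: (st_ext hr) => e /=; case: ifP => // heA.
  have : e \notin D by apply/negP => heD; move/subsetP: hDA' => /(_ e heD); rewrite heA.
  by rewrite -er inE negbK => /eqP ->.
apply: (st_ext (st_lin 1 (om x / r x) IH' hrA)) => e /=.
case: ifP => _; last by rewrite !mulr0 addr0.
by rewrite /om' !mul1r mulNr addrNK.
Qed.

End LinAlg2.

Lemma mmap_ext n (S : ringType) (f : rat -> S) (h1 h2 : 'I_n -> S) P :
  h1 =1 h2 -> mmap f h1 P = mmap f h2 P.
Proof.
by move=> eq; rewrite /mmap; apply: eq_bigr => m _; rewrite (mmap1_eq _ eq).
Qed.

Lemma mmap_comp n k (S : comRingType) (f : {rmorphism rat -> S}) (x : 'I_k -> S)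
  (lq : n.-tuple {mpoly rat[k]}) (P : {mpoly rat[n]}) :
  mmap f x (P \mPo lq) = mmap f (fun i => mmap f x (tnth lq i)) P.
Proof.
rewrite comp_mpolyEX [X in _ = mmap _ _ X](mpolyE P) !raddf_sum /=.
apply: eq_bigr => m _; rewrite !mmapZ mmapX.
rewrite comp_mpolyX rmorph_prod /mmap1; congr (_ * _).
by apply: eq_bigr => i _; rewrite rmorphXn.
Qed.

Lemma generic_proj (V : finType) (k k' : nat) (s : 'I_k' -> 'I_k) (p : V -> 'I_k -> R) :
  injective s -> generic p -> generic (fun v i => p v (s i)).
Proof.
rewrite /generic /alg_indep_Q => inj gp P nzP.
pose tau (vi : V * 'I_k') : V * 'I_k := (vi.1, s vi.2).
have tau_inj : injective tau.
  by move=> [v1 i1] [v2 i2] [/= -> /inj ->].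
pose lq := [tuple ('X_(enum_rank (tau (enum_val j))) : {mpoly rat[#|{: V * 'I_k}|]})
            | j < #|{: V * 'I_k'}|].
have eval : mmap (@ratr R) (fun j => p (enum_val j).1 (enum_val j).2) (P \mPo lq) =
            mmap (@ratr R) (fun j => p (enum_val j).1 (s (enum_val j).2)) P.
  rewrite mmap_comp; apply: mmap_ext => j.
  by rewrite tnth_map tnth_ord_tuple mmapX mmap1U enum_rankK.
have nz : P \mPo lq != 0.
  apply: contra nzP => /eqP h0.
  pose lb := [tuple ((if [pick j' : 'I_#|{: V * 'I_(k')}| | enum_rank (tau (enum_val j')) == j] is Some j'
                     then 'X_j' else 0) : {mpoly rat[#|{: V * 'I_(k')}|]})
              | j < #|{: V * 'I_k}|].
  have hP : (P \mPo lq) \mPo lb = P.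
    have -> : (P \mPo lq) \mPo lb = mmap (@mpolyC _ rat) (tnth lb) (P \mPo lq) by [].
    rewrite mmap_comp -[RHS]comp_mpoly_id; apply: mmap_ext => j.
    rewrite !tnth_map !tnth_ord_tuple mmapX mmap1U tnth_map tnth_ord_tuple.
    case: pickP => [j' /eqP hj'|hn]; last by have := hn j; rewrite eqxx.
    by move/enum_rank_inj/tau_inj/enum_val_inj: hj' => ->.
  by rewrite -hP h0 comp_mpoly0.
by have := gp _ nz; rewrite eval.
Qed.

Section Gram.
Variables (V : finType) (k : nat) (F : {set {set V}}).

Definition gram (p : V -> 'I_k -> R) : 'M[R]_#|F| :=
  \matrix_(a, b) \sum_(wi : V * 'I_k)
     rig_entry p (enum_val a) wi.1 wi.2 * rig_entry p (enum_val b) wi.1 wi.2.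

Lemma gram_mul (p : V -> 'I_k -> R) (v : 'rV[R]_#|F|) b : (v *m gram p) 0 b =
  \sum_(wi : V * 'I_k) (\sum_a v 0 a * rig_entry p (enum_val a) wi.1 wi.2)
      * rig_entry p (enum_val b) wi.1 wi.2.
Proof.
rewrite !mxE; under eq_bigr => a _ do rewrite mxE mulr_sumr.
rewrite exchange_big; apply: eq_bigr => wi _; rewrite mulr_suml.
by apply: eq_bigr => a _; rewrite mulrA.
Qed.

Lemma sumF (p : V -> 'I_k -> R) (c : {set V} -> R) w i :
  \sum_(e in F) c e * rig_entry p e w i =
  \sum_(a < #|F|) c (enum_val a) * rig_entry p (enum_val a) w i.
Proof. exact: big_enum_val. Qed.

Lemma gram_indep (p : V -> 'I_k -> R) : rows_indep p F <-> \det (gram p) != 0.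
Proof.
split.
- move=> hF; apply/negP => /det0P [v vnz hv].
  pose u := fun wi : V * 'I_k => \sum_a v 0 a * rig_entry p (enum_val a) wi.1 wi.2.
  have h2 : \sum_wi u wi ^+ 2 = 0.
    transitivity (\sum_b (v *m gram p) 0 b * v 0 b).
      under [RHS]eq_bigr => b _ do rewrite gram_mul mulr_suml.
      rewrite exchange_big; apply: eq_bigr => wi _; rewrite expr2 {2}/u mulr_sumr.
      by apply: eq_bigr => b _; rewrite [v 0 b * _]mulrC mulrA.
    by rewrite hv; apply: big1 => b _; rewrite mxE mul0r.
  have hu : forall wi, u wi = 0.
    move=> wi; apply/eqP; rewrite -sqrf_eq0; apply/eqP.
    exact: (psumr_eq0P (fun i _ => sqr_ge0 (u i)) h2).
  pose c := fun e => \sum_(a | enum_val a == e) v 0 a.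
  have hc : forall a, c (enum_val a) = v 0 a.
    by move=> a; rewrite /c (big_pred1 a) // => b; rewrite /= (inj_eq enum_val_inj).
  have hcst : forall w i, \sum_(e in F) c e * rig_entry p e w i = 0.
    move=> w i; rewrite sumF -[RHS](hu (w, i)) /u /=.
    by apply: eq_bigr => a _; rewrite hc.
  have hc0 := hF c hcst.
  apply: (negP vnz); apply/eqP/rowP => a; rewrite mxE -hc; apply: hc0.
  exact: enum_valP.
- move=> hdet c hc e he.
  pose v := \row_a c (enum_val a) : 'rV[R]_#|F|.
  have hv : v *m gram p = 0.
    apply/rowP => b; rewrite gram_mul mxE big1 // => wi _.
    have -> : \sum_a v 0 a * rig_entry p (enum_val a) wi.1 wi.2 = 0.
      rewrite -[RHS](hc wi.1 wi.2) sumF; apply: eq_bigr => a _; by rewrite mxE.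
    by rewrite mul0r.
  have v0 : v = 0.
    apply/eqP; apply: contraNT hdet => hnz; apply/det0P; by exists v.
  have := congr1 (fun m : 'rV[R]_#|F| => m 0 (enum_rank_in he e)) v0.
  by rewrite !mxE enum_rankK_in.
Qed.

Definition Xv (vi : V * 'I_k) : {mpoly rat[#|{: V * 'I_k}|]} := 'X_(enum_rank vi).
Definition REp (e : {set V}) w i :=
  if w \in e then \sum_(x in e) (Xv (w, i) - Xv (x, i)) else 0.
Definition gramp : 'M[{mpoly rat[#|{: V * 'I_k}|]}]_#|F| :=
  \matrix_(a, b) \sum_(wi : V * 'I_k) REp (enum_val a) wi.1 wi.2 * REp (enum_val b) wi.1 wi.2.

Lemma eval_gram (p : V -> 'I_k -> R) :
  mmap (@ratr R) (fun j => p (enum_val j).1 (enum_val j).2) (\det gramp) = \det (gram p).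
Proof.
rewrite -det_map_mx; congr (\det _); apply/matrixP => a b.
rewrite !mxE rmorph_sum; apply: eq_bigr => wi _; rewrite rmorphM /=.
congr (_ * _); rewrite /REp /rig_entry; case: ifP => _; rewrite ?rmorph0 //;
  rewrite rmorph_sum; apply: eq_bigr => x _;
  by rewrite rmorphB /= /Xv !mmapX !mmap1U !enum_rankK.
Qed.

Lemma indep_inv (p p' : V -> 'I_k -> R) : generic p -> generic p' -> rows_indep p F -> rows_indep p' F.
Proof.
move=> gp gp' /gram_indep hd; apply/gram_indep.
rewrite -eval_gram; apply: gp'.
apply: contra hd => /eqP h0; by rewrite -eval_gram h0 rmorph0.
Qed.

Lemma rig_indep_at (q : V -> 'I_k -> R) : generic q -> (rig_indep k F <-> rows_indep q F).
Proof.
move=> gq; split; first by move=> h; exact: h.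
by move=> h p gp; exact: indep_inv gq gp h.
Qed.

End Gram.

Definition pb (P : Prop) : bool := if excluded_middle_informative P then true else false.
Lemma pbP (P : Prop) : pb P <-> P.
Proof. by rewrite /pb; case: excluded_middle_informative. Qed.

Lemma rig_entry_proj (V : finType) k k' (p : V -> 'I_k -> R) (s : 'I_k' -> 'I_k) e w j :
  rig_entry (fun v i => p v (s i)) e w j = rig_entry p e w (s j).
Proof. by []. Qed.

Theorem theorem5p1 (V : finType) (E : {set {set V}}) (d : nat) :
  simple_graph E -> M_connected d E ->
  forall d' : nat, (1 <= d')%N -> (d' <= d)%N -> M_connected d' E.
Proof.
move=> _ hM d' hd1 hdd e f eE fE nef.
have [C [[CE Cdep Cmin] [eC fC]]] := hM e f eE fE nef.
have [p [gp np]] : exists p : V -> 'I_d -> R, generic p /\ ~ rows_indep p C.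
  apply: NNPP => h; apply: Cdep => p gp; apply: NNPP => hn; apply: h; by exists p.
have [om [hom hsC hne]] := dep_stress np.
have hsuppC : supp om = C.
  apply/eqP; rewrite eqEproper hsC /=; apply/negP => hpr.
  have := (indepP p _).1 (Cmin _ hpr p gp) om hom (subxx _).
  by move/eqP; rewrite (negbTE hne).
apply: NNPP => hno.
have d_pos : (0 < d)%N by apply: leq_trans hdd.
pose sh (s : 'I_d) (j : 'I_d') : 'I_d := Ordinal (ltn_pmod (j + s) d_pos).
have sh_inj : forall s, injective (sh s).
  move=> s j1 j2 /(congr1 val) /= /eqP; rewrite eqn_modDr.
  have l1 : (j1 < d)%N := leq_trans (ltn_ord j1) hdd.
  have l2 : (j2 < d)%N := leq_trans (ltn_ord j2) hdd.
  by rewrite !modn_small // => /eqP /val_inj.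
pose q s := fun v (i : 'I_d') => p v (sh s i).
have gq : forall s, generic (q s) := fun s => generic_proj (sh_inj s) gp.
pose linked g := g = e \/ exists D : {set {set V}},
  [/\ rig_circuit d' E D, D \subset C, e \in D & g \in D].
pose A := [set g in C | pb (linked g)].
have circ_iff : forall s (D : {set {set V}}), D \subset E ->
    (rig_circuit d' E D <-> circ (q s) D).
  move=> s D DE; split.
  - case=> _ hdep hmin; split.
    + by move=> h; apply: hdep; apply/(rig_indep_at D (gq s)).
    + by move=> D' hD'; apply/(rig_indep_at D' (gq s)); exact: hmin.
  - case=> hdep hmin; split => //.
    + by move=> h; apply: hdep; exact: (rig_indep_at D (gq s)).1 h.
    + by move=> D' hD'; apply/(rig_indep_at D' (gq s)); exact: hmin.
have hAC : A \subset C by apply/subsetP => g; rewrite inE => /andP [].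
have eA : e \in A by rewrite inE eC; apply/pbP; left.
have fA : f \notin A.
  rewrite inE fC /=; apply/negP => /pbP [hfe|[D [hD _ heD hfD]]].
    by move: nef; rewrite hfe eqxx.
  by apply: hno; exists D.
have closedA : forall s (D : {set {set V}}), circ (q s) D -> D \subset C ->
    D :&: A != set0 -> D \subset A.
  move=> s D cD DC /set0Pn [g]; rewrite inE => /andP [gD gA].
  move: gA; rewrite inE => /andP [gC /pbP lg].
  have DE := subset_trans DC CE.
  apply/subsetP => h hD; rewrite inE (subsetP DC h hD) /=; apply/pbP; right.
  case: lg => [ge|[D' [cD' D'C eD' gD']]].
    exists D; split => //; [exact/(circ_iff s D DE) | by rewrite -ge].
  have cD'q := (circ_iff s D' (subset_trans D'C CE)).1 cD'.
  have hm : D :&: D' != set0 by apply/set0Pn; exists g; rewrite inE gD gD'.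
  have [D'' [c'' e'' h'' s'']] := circ_trans cD'q cD eD' hD hm.
  have D''C : D'' \subset C by apply: subset_trans s'' _; rewrite subUset D'C DC.
  by exists D''; split => //; apply/(circ_iff s D'' (subset_trans D''C CE)).
have hstq : forall s, st (q s) om by move=> s w i; exact: hom w (sh s i).
have hres : forall s, st (q s) (fun e => if e \in A then om e else 0).
  move=> s; have := sep (closedA s) (ltnSn _) (hstq s) hsC; exact.
have hstp : st p (fun e => if e \in A then om e else 0).
  move=> w i.
  pose j0 : 'I_d' := Ordinal hd1.
  have e0 : sh i j0 = i by apply/val_inj; rewrite /= add0n modn_small.
  rewrite -[in LHS]e0; exact: hres i w j0.
have hApr : A \proper C by rewrite properE hAC /=; apply/subsetPn; exists f.
have hsA : supp (fun e => if e \in A then om e else 0) \subset A.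
  by apply/subsetP => x; rewrite inE; case: ifP => // _; rewrite eqxx.
have := (indepP p A).1 (Cmin A hApr p gp) _ hstp hsA.
move/setP => /(_ e); rewrite in_set0 [e \in supp _]inE eA.
have : e \in supp om by rewrite hsuppC.
by rewrite inE => ->.
Qed.
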